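(* Let $N\ge 1$ and $d$ be integers and let $d_1,\dots,d_N,\rho_1,\dots,\rho_N$ be integers with $$0\le d_1<\rho_N\le d_2<\rho_{N-1}\le d_3<\dots\le d_N<\rho_1\le d .$$ Put $m=d-\sum_{l=1}^N\rho_l+\sum_{l=1}^N d_l$ and assume $m>0$. Let $$\mathcal L=\{d_1+1,\dots,\rho_N-1\}\cup\{d_2+1,\dots,\rho_{N-1}-1\}\cup\dots\cup\{d_N+1,\dots,\rho_1-1\}$$ (so $|\mathcal L|=d-m-N=:K$). Then there exist unique complex constants $C_1,\dots,C_K$ such that the polynomial $$P(x)=(x+1)^{m+N}+C_1(x+1)^{m+N+1}+\dots+C_K(x+1)^{d}$$ has zero coefficient of $x^l$ for every $l\in\mathcal L$; equivalently, the $K\times K$ linear system $\binom{m+N}{l_i}+\sum_{j=1}^{K}C_j\binom{m+N+j}{l_i}=0$, $1\le i\le K$ (where $l_1,\dots,l_K$ are the elements of $\mathcal L$), has nonzero determinant. *)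

(* Defs.v *)
From mathcomp Require Import all_boot all_order all_algebra.
From mathcomp Require Import complex.
From mathcomp Require Import Rstruct.
From Stdlib Require Import Reals.

Set Implicit Arguments.
Unset Strict Implicit.
Unset Printing Implicit Defensive.
Import Order.TTheory GRing.Theory Num.Theory.

Definition Cplx := complex Rdefinitions.R.

(* Indices l = 1..N of the sequences d_l and rho_l; values at other indices
   are irrelevant. *)

(* The exceptional set L: l is in L iff d_i < l < rho_{N+1-i} for some
   i in {1..N} (here i = j+1 with j : 'I_N). *)
Definition inL (N : nat) (dd rho : nat -> nat) (l : nat) : bool :=
  [exists j : 'I_N, (dd j.+1 < l) && (l < rho (N - j))].

(* m = d - sum rho_l + sum d_l (as a natural number; positivity is a
   separate hypothesis of the theorem). *)
Definition mval (N d : nat) (dd rho : nat -> nat) : nat :=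
  (d + \sum_(1 <= l < N.+1) dd l - \sum_(1 <= l < N.+1) rho l)%N.

Definition Kval (N d : nat) (dd rho : nat -> nat) : nat :=
  (d - mval N d dd rho - N)%N.

Local Open Scope ring_scope.

(* P(x) = (x+1)^(m+N) + sum_{j=1}^K C_j (x+1)^(m+N+j); the j-th constant
   C_j is c (j-1) for c indexed by 'I_K. *)
Definition Ppoly (m N K : nat) (c : {ffun 'I_K -> Cplx}) : {poly Cplx} :=
  ('X + 1) ^+ (m + N) + \sum_(j < K) c j *: ('X + 1) ^+ (m + N + j.+1).

(* Main.v *)
Require Import Defs.
From mathcomp Require Import all_boot all_order all_algebra.
From mathcomp Require Import complex.
From mathcomp Require Import Rstruct.
From mathcomp Require Import ring zify.
Import GRing.Theory Num.Theory.
Local Open Scope ring_scope.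

Lemma sparse (F : numFieldType) (a : F) : a != 0 -> forall k (p r : {poly F}) (S : seq nat),
 (size S <= k)%N -> (forall i, p`_i != 0 -> i \in S) -> p = r * ('X - a%:P)^+k -> p = 0.
Proof.
move=> a0; elim=> [|k IH] p r S hS hsupp hp.
  apply/polyP=> i; rewrite coef0; apply/eqP; apply/negPn/negP=> /hsupp.
  by move: hS; rewrite leqn0 => /nilP ->.
have [->//|pn0] := eqVneq p 0.
set c := (size p).-1.
have pc : p`_c != 0 by rewrite -lead_coefE lead_coef_eq0.
pose q := 'X * p^`() - p *+ c.
have qc : forall i, q`_i = p`_i *+ i - p`_i *+ c.
  move=> i; rewrite /q coefB coefMn coefXM coef_deriv.
  by case: i => [|i] //=; rewrite mulr0n.
have q0 : q = 0.
  apply: (IH q ('X * (r^`() * ('X - a%:P) + r *+ k.+1) - (r * ('X - a%:P)) *+ c) (filter (predC1 c) S)).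
  - rewrite size_filter.
    have h1 := count_predC (pred1 c) S.
    have h2 : (0 < count (pred1 c) S)%N by rewrite -has_count; apply/hasP; exists c; [exact: hsupp | exact: eqxx].
    have -> : count (predC1 c) S = count (predC (pred1 c)) S by apply: eq_count.
    move: h1 h2 hS; set u := count _ S; set v := count _ S => h1 h2; rewrite -h1 => hS; lia.
  - move=> i; rewrite qc mem_filter /= => hi.
    have pi : p`_i != 0 by apply: contraNneq hi => ->; rewrite !mul0rn subrr.
    rewrite (hsupp _ pi) andbT; apply/negP => /eqP ic; move: hi; by rewrite ic subrr eqxx.
  - rewrite /q hp derivM deriv_exp derivXsubC mul1r /=.
    rewrite exprS; ring.
have pi : forall i, i != c -> p`_i = 0.
  move=> i ic; have := qc i; rewrite q0 coef0 => /esym/eqP.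
  rewrite -[p`_i *+ i]mulr_natr -[p`_i *+ c]mulr_natr -mulrBr mulf_eq0 subr_eq0 eqr_nat (negbTE ic) orbF.
  by move/eqP.
have pE : p = p`_c *: 'X^c.
  apply/polyP=> i; rewrite coefZ coefXn.
  have [->|ic] := eqVneq i c; first by rewrite mulr1.
  by rewrite mulr0 pi.
have : p.[a] = 0.
  rewrite hp hornerM horner_exp hornerD hornerN hornerX hornerC subrr expr0n mulr0 //.
rewrite pE hornerZ hornerXn => /eqP; rewrite mulf_eq0 expf_eq0 (negbTE pc) (negbTE a0) andbF.
by [].
Qed.

Local Close Scope ring_scope.
Lemma count_int (A B n : nat) :
  count (fun l => (A < l) && (l < B)) (iota 0 n) = minn n B - minn n A.+1.
Proof.
elim: n => [|n IH]; first by rewrite /=; lia.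
rewrite -[in iota 0 _]addn1 iotaD count_cat IH /= add0n addn0.
case: (ltnP A n) => h1; case: (ltnP n B) => h2 /=; lia.
Qed.

Section Chain.
Variables (a b : nat -> nat).

Definition P (N : nat) (l : nat) : bool :=
  [exists j : 'I_N, (a j.+1 < l) && (l < b j.+1)].

Lemma b_mono N : (forall i, 1 <= i <= N -> a i < b i) ->
  (forall i, 1 <= i < N -> b i <= a i.+1) ->
  forall i j, 1 <= i -> i <= j -> j <= N -> b i <= b j.
Proof.
move=> hab hba i j hi; elim: j => [|j IH] hij hjN; first by lia.
rewrite leq_eqVlt in hij; case/orP: hij => [/eqP->//|hij].
have := IH hij (ltnW hjN); have := hba j; have := hab j.+1. lia.
Qed.

Lemma P_lt N l : (forall i, 1 <= i <= N -> a i < b i) ->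
  (forall i, 1 <= i < N -> b i <= a i.+1) -> P N l -> l < b N.
Proof.
move=> hab hba /existsP [j /andP [_ h]].
have := b_mono N hab hba j.+1 N (ltn0Sn _) (ltn_ord j) (leqnn _). lia.
Qed.

Lemma PS N l : P N.+1 l = P N l || ((a N.+1 < l) && (l < b N.+1)).
Proof.
apply/existsP/orP.
  case=> j hj; have [jN|jN] := ltnP j N.
    by left; apply/existsP; exists (Ordinal jN).
  move: hj; have -> : (j : nat) = N by have := ltn_ord j; lia.
  by right.
case=> [/existsP [j hj]|h]; first by exists (widen_ord (leqnSn _) j).
by exists ord_max.
Qed.

Lemma count_P N n : (forall i, 1 <= i <= N -> a i < b i) ->
  (forall i, 1 <= i < N -> b i <= a i.+1) -> (0 < N -> b N <= n) ->
  count (P N) (iota 0 n) = \sum_(i < N) (b i.+1 - (a i.+1).+1).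
Proof.
elim: N => [|N IH] hab hba hn.
  rewrite big_ord0; apply/eqP; rewrite -leqn0 leqNgt -has_count; apply/hasP => -[l _].
  by case/existsP => -[].
rewrite big_ord_recr /= -IH; first last.
- move=> hN; have := hba N; have := hab N.+1; have := hn (ltn0Sn _); lia.
- by move=> i hi; apply: hba; lia.
- by move=> i hi; apply: hab; lia.
rewrite (eq_count (a2 := predU (P N) (fun l => (a N.+1 < l) && (l < b N.+1)))); last by move=> l; rewrite PS.
have := count_predUI (P N) (fun l => (a N.+1 < l) && (l < b N.+1)) (iota 0 n).
rewrite (eq_count (a1 := predI _ _) (a2 := pred0)); last first.
  move=> l /=; apply/negbTE/negP => /andP [hP /andP [h1 h2]].
  have [N0|Npos] := posnP N.
    by move: hP; rewrite N0; case/existsP => -[].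
  have := @P_lt N l (fun i hi => hab i ltac:(lia)) (fun i hi => hba i ltac:(lia)) hP.
  have := hba N. lia.
rewrite count_pred0 addn0 => ->; rewrite count_int.
have := hab N.+1; have := hn (ltn0Sn _). lia.
Qed.

End Chain.
Local Open Scope ring_scope.

Lemma coefXp1 (n l : nat) : (('X + 1 : {poly Cplx}) ^+ n)`_l = ('C(n, l))%:R.
Proof.
rewrite exprD1n coef_sum.
under eq_bigr do rewrite coefMn coefXn.
case: (ltnP l n.+1) => hl.
  rewrite (bigD1 (Ordinal hl)) //= eqxx mulr1n big1 ?addr0 //.
  move=> i hi; case: eqP => [e|]; last by rewrite mul0rn.
  by exfalso; move: hi; rewrite -(inj_eq val_inj) /= e eqxx.
rewrite bin_small // big1 // => i _.
rewrite (_ : (l == i) = false) ?mul0rn //; apply/negbTE.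
have := ltn_ord i; lia.
Qed.

Lemma coefPpoly m N K (c : {ffun 'I_K -> Cplx}) l :
  (Ppoly m N c)`_l = ('C(m + N, l))%:R + \sum_(j < K) c j * ('C(m + N + j.+1, l))%:R.
Proof.
rewrite /Ppoly coefD coefXp1 coef_sum; congr (_ + _); apply: eq_bigr => j _.
by rewrite coefZ coefXp1.
Qed.

Theorem mainTheorem4 (N d : nat) (dd rho : nat -> nat)
  (hN : (1 <= N)%N)
  (h1 : forall i : nat, (1 <= i <= N)%N -> (dd i < rho (N.+1 - i))%N)
  (h2 : forall i : nat, (1 <= i < N)%N -> (rho (N.+1 - i) <= dd i.+1)%N)
  (h3 : (rho 1 <= d)%N)
  (hm : (\sum_(1 <= l < N.+1) rho l < d + \sum_(1 <= l < N.+1) dd l)%N) :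
  exists! c : {ffun 'I_(Kval N d dd rho) -> Cplx},
    forall l : nat, inL N dd rho l ->
      (Ppoly (mval N d dd rho) N c)`_l = 0.
Proof.
pose b i := rho (N.+1 - i)%N.
have hLP : inL N dd rho =1 P dd b N.
  by move=> l; rewrite /inL /P; apply: eq_existsb => j; rewrite /b subSS.
have hLt : forall l, inL N dd rho l -> (l <= d)%N.
  move=> l; rewrite hLP => /(@P_lt dd b N l h1 h2); rewrite /b subSnn; lia.
have hcnt := @count_P dd b N d.+1 h1 h2 (fun _ => ltac:(rewrite /b subSnn; lia)).
have hSA : (\sum_(1 <= l < N.+1) dd l = \sum_(i < N) dd i.+1)%N by rewrite big_add1 big_mkord.
have hSB : (\sum_(1 <= l < N.+1) rho l = \sum_(i < N) b i.+1)%N.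
  rewrite big_add1 big_mkord /= (reindex_inj rev_ord_inj) /=; apply: eq_bigr => i _.
  rewrite /b; congr rho; have := ltn_ord i; lia.
have hsum : (\sum_(i < N) (b i.+1 - (dd i.+1).+1) + \sum_(i < N) dd i.+1 + N = \sum_(i < N) b i.+1)%N.
  rewrite -[N in (_ + N)%N]card_ord -sum1_card -!big_split /=; apply: eq_bigr => i _.
  have := h1 i.+1; have := ltn_ord i; rewrite /b; lia.
set K := Kval N d dd rho.
set m := mval N d dd rho.
have hK : count (inL N dd rho) (iota 0 d.+1) = K.
  rewrite (eq_count hLP) hcnt /K /Kval /mval hSA hSB.
  move: hsum hm; rewrite hSA hSB; lia.
have hmNK : (m + N + K = d)%N.
  rewrite /K /Kval /m /mval; move: hsum hm; rewrite hSA hSB; lia.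
clearbody K m.
set L := inL N dd rho in hLt hK *.
have inj : forall c : 'I_K -> Cplx,
    (forall l, L l -> \sum_(j < K) c j * ('C(m + N + j.+1, l))%:R = 0) -> forall j, c j = 0.
  move=> c hc.
  pose Q : {poly Cplx} := \sum_(j < K) c j *: ('X + 1) ^+ (m + N + j.+1).
  pose R : {poly Cplx} := \sum_(j < K) c j *: ('X + 1) ^+ j.
  have hQR : Q = R * ('X - (-1)%:P) ^+ (m + N).+1.
    rewrite polyCN opprK polyC1 /Q /R mulr_suml; apply: eq_bigr => j _.
    by rewrite -scalerAl -exprD addnC addSn addnS.
  have hQc : forall l, Q`_l = \sum_(j < K) c j * ('C(m + N + j.+1, l))%:R.
    by move=> l; rewrite coef_sum; apply: eq_bigr => j _; rewrite coefZ coefXp1.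
  have Q0 : Q = 0.
    apply: (@sparse _ (-1) _ (m + N).+1 Q R (filter (predC L) (iota 0 d.+1))) => //.
    - by rewrite oppr_eq0 oner_eq0.
    - rewrite size_filter; have := count_predC L (iota 0 d.+1).
      rewrite size_iota hK; lia.
    - move=> l; rewrite hQc mem_filter mem_iota /= add0n => hl.
      apply/andP; split.
        by apply: contra hl => /hc ->.
      rewrite ltnNge; apply: contra hl => hdl.
      rewrite big1 // => j _; rewrite bin_small ?mulr0 //.
      have := ltn_ord j; lia.
  have R0 : R = 0.
    move/eqP: Q0; rewrite hQR mulf_eq0 expf_eq0 polyXsubC_eq0 andbF orbF.
    by move/eqP.
  have R' : R = (\sum_(j < K) c j *: 'X^j) \Po ('X + 1%:P).
    rewrite (big_morph (fun p => p \Po ('X + 1%:P)) (fun p q => comp_polyD p q ('X + 1%:P)) (comp_poly0 _)).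
    by apply: eq_bigr => j _; rewrite comp_polyZ comp_Xn_poly polyC1.
  move=> j; have : (\sum_(j < K) c j *: 'X^j : {poly Cplx}) = 0.
    by apply/eqP; rewrite -(@comp_poly_eq0 _ _ ('X + 1%:P)) ?size_XaddC // -R' R0.
  move=> e; have := congr1 (fun p : {poly Cplx} => p`_j) e; rewrite /= coef_sum coef0 (bigD1 j) //= coefZ coefXn eqxx mulr1.
  rewrite big1 ?addr0 // => i hi; rewrite coefZ coefXn.
  by rewrite (_ : (j == i :> nat) = false) ?mulr0 //; apply/negbTE; rewrite eq_sym (inj_eq val_inj).
pose s := filter L (iota 0 d.+1).
have hs : size s = K by rewrite size_filter.
have hsL : forall l, L l -> (index l s < K)%N /\ nth 0%N s (index l s) = l.
  move=> l hl; have ls : l \in s by rewrite mem_filter hl mem_iota add0n ltnS hLt.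
  by rewrite -hs index_mem nth_index.
pose A : 'M[Cplx]_K := \matrix_(i, j) ('C(m + N + i.+1, nth 0%N s j))%:R.
pose b0 : 'rV[Cplx]_K := \row_j ('C(m + N, nth 0%N s j))%:R.
have hA : forall (u : 'rV[Cplx]_K) j,
    (u *m A) 0 j = \sum_i u 0 i * ('C(m + N + i.+1, nth 0%N s j))%:R.
  by move=> u j; rewrite !mxE; apply: eq_bigr => i _; rewrite mxE.
have uA : A \in unitmx.
  rewrite -row_free_unit; apply: inj_row_free => u hu.
  apply/rowP => i; rewrite [RHS]mxE.
  apply: (inj (fun i => u 0 i)) => l hl.
  have [hi hn] := hsL l hl.
  by rewrite -hn -(hA u (Ordinal hi)) hu mxE.
pose u := - (b0 *m invmx A).
have huA : u *m A = - b0 by rewrite /u mulNmx mulmxKV.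
pose c := [ffun i => u 0 i].
have hc : forall l, L l -> (Ppoly m N c)`_l = 0.
  move=> l hl; rewrite coefPpoly; have [hi hn] := hsL l hl.
  have := congr1 (fun M : 'rV[Cplx]_K => M 0 (Ordinal hi)) huA.
  rewrite /= hA !mxE /= hn => e.
  rewrite (eq_bigr (fun i => u 0 i * ('C(m + N + i.+1, l))%:R)) ?e ?addrN //.
  by move=> i _; rewrite ffunE.
exists c; split => // c' hc'.
apply/ffunP => i; apply/eqP; rewrite -subr_eq0; apply/eqP.
apply: (inj (fun i => c i - c' i) _ i) => l hl.
have := hc l hl; have := hc' l hl; rewrite !coefPpoly => e1 e2.
rewrite (eq_bigr (fun i => c i * ('C(m + N + i.+1, l))%:R - c' i * ('C(m + N + i.+1, l))%:R)).
  rewrite sumrB; apply: (@addrI _ ('C(m + N, l))%:R).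
  rewrite addrA e2 add0r addr0; apply/esym/eqP; by rewrite -addr_eq0 e1.
by move=> j _; rewrite mulrBl.
Qed.
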